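(* Let $A$ be a real $n\times n$ matrix, $\alpha>0$, and $F_{A,\alpha}(u)=|u|^\alpha Au$ for $u\in\mathbb R^n$. If $$\frac{\mathrm{Tr}(A)}{|A|}\ge\sqrt{n-\frac1{(1+\alpha)^2}},$$ then $F_{A,\alpha}$ is monotone. If the inequality is strict, then $F_{A,\alpha}$ is $(\alpha+2)$-monotone.
   Context: $|u|$ is the Euclidean norm of $u$; for a matrix $A=(a_{ij})$, $|A|=(\sum_{i,j}a_{ij}^2)^{1/2}$ and $\mathrm{Tr}$ is the trace. A map $F:\mathbb R^n\to\mathbb R^n$ is monotone if $(F(u)-F(v))\cdot(u-v)\ge0$ for all $u,v$; for $\beta>0$ it is $\beta$-monotone if there is $C>0$ with $(F(u)-F(v))\cdot(u-v)\ge C|u-v|^\beta$ for all $u,v$. *)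

(* Defs.v *)
From HB Require Import structures.
From mathcomp Require Import all_boot all_order all_algebra.
From mathcomp Require Import reals exp.
Set Implicit Arguments. Unset Strict Implicit. Unset Printing Implicit Defensive.
Import Order.TTheory GRing.Theory Num.Theory.
Local Open Scope ring_scope.

Definition dotv (R : realType) (n : nat) (u v : 'cV[R]_n) : R :=
  \sum_(i < n) u i 0 * v i 0.
Definition enorm (R : realType) (n : nat) (u : 'cV[R]_n) : R :=
  Num.sqrt (\sum_(i < n) u i 0 ^+ 2).
Definition frob (R : realType) (n : nat) (A : 'M[R]_n) : R :=
  Num.sqrt (\sum_(i < n) \sum_(j < n) A i j ^+ 2).

(* F_{A,alpha}(u) = |u|^alpha A u  (powR 0 alpha = 0 for alpha > 0) *)
Definition F_Aalpha (R : realType) (n : nat) (A : 'M[R]_n) (alpha : R)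
  (u : 'cV[R]_n) : 'cV[R]_n := powR (enorm u) alpha *: (A *m u).

Definition monotone_map (R : realType) (n : nat) (F : 'cV[R]_n -> 'cV[R]_n) :=
  forall u v, 0 <= dotv (F u - F v) (u - v).

Definition beta_monotone (R : realType) (n : nat) (beta : R)
  (F : 'cV[R]_n -> 'cV[R]_n) :=
  exists C : R, 0 < C /\
    forall u v, C * powR (enorm (u - v)) beta <= dotv (F u - F v) (u - v).

(* Main.v *)
Require Import Defs.
From HB Require Import structures.
From mathcomp Require Import all_boot all_order all_algebra.
From mathcomp Require Import reals exp.
From mathcomp Require Import ring lra.
Import Order.TTheory GRing.Theory Num.Theory.
Local Open Scope ring_scope.
Set Implicit Arguments. Unset Strict Implicit.

Section Aux.
Variable R : realType.

Lemma CS (I : finType) (f g : I -> R) :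
  (\sum_i f i * g i) ^+ 2 <= (\sum_i f i ^+ 2) * (\sum_i g i ^+ 2).
Proof.
set X := \sum_i f i ^+ 2; set Y := \sum_i g i ^+ 2; set Z := \sum_i f i * g i.
have H : 0 <= \sum_i \sum_j (f i ^+ 2 * g j ^+ 2 + f j ^+ 2 * g i ^+ 2
       - 2 * ((f i * g i) * (f j * g j))).
  apply: sumr_ge0 => i _; apply: sumr_ge0 => j _.
  have -> : f i ^+ 2 * g j ^+ 2 + f j ^+ 2 * g i ^+ 2
       - 2 * ((f i * g i) * (f j * g j)) = (f i * g j - f j * g i) ^+ 2 by ring.
  exact: sqr_ge0.
have e1 : \sum_i \sum_j f i ^+ 2 * g j ^+ 2 = X * Y.
  by rewrite /X mulr_suml; apply: eq_bigr => i _; rewrite mulr_sumr.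
have e2 : \sum_i \sum_j f j ^+ 2 * g i ^+ 2 = X * Y.
  by rewrite exchange_big /=; rewrite -e1; apply: eq_bigr => i _; apply: eq_bigr.
have e3 : \sum_i \sum_j 2 * ((f i * g i) * (f j * g j)) = 2 * Z ^+ 2.
  rewrite expr2 /Z mulr_suml mulr_sumr; apply: eq_bigr => i _.
  by rewrite !mulr_sumr; apply: eq_bigr => j _.
have : \sum_i \sum_j (f i ^+ 2 * g j ^+ 2 + f j ^+ 2 * g i ^+ 2
       - 2 * ((f i * g i) * (f j * g j))) =
   (\sum_i \sum_j f i ^+ 2 * g j ^+ 2 + \sum_i \sum_j f j ^+ 2 * g i ^+ 2)
   - \sum_i \sum_j 2 * ((f i * g i) * (f j * g j)).
  rewrite -big_split /= -sumrN -big_split /=; apply: eq_bigr => i _.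
  by rewrite -sumrN -!big_split.
move=> E; rewrite E e1 e2 e3 in H; lra.
Qed.
Lemma core (al a b x y p : R) : 0 < al -> 0 <= b -> b <= a -> 0 <= y -> y <= x ->
  x * ((1 + al) * b - al * a) <= b * y -> p <= a * b -> - (a * b) <= p ->
  let S := x * a ^+ 2 + y * b ^+ 2 - (x + y) * p in
  let W2 := x ^+ 2 * a ^+ 2 + y ^+ 2 * b ^+ 2 - 2 * x * y * p in
  let D2 := a ^+ 2 + b ^+ 2 - 2 * p in
  [/\ W2 * D2 <= (1 + al) ^+ 2 * S ^+ 2, 0 <= S, x / 2 * D2 <= S & D2 <= (2 * a) ^+ 2].
Proof.
move=> al0 b0 ba y0 yx bern pab pab' S W2 D2.
have D2ge : 0 <= D2 by rewrite /D2; nra.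
have W2ge : 0 <= W2.
  have : (x * a - y * b) ^+ 2 <= W2.
    have h : 0 <= 2 * x * y * (a * b - p).
      apply: mulr_ge0; last lra; apply: mulr_ge0 => //; apply: mulr_ge0; lra.
    rewrite /W2; lra.
  move=> h; apply: le_trans h; exact: sqr_ge0.
have Sge : x / 2 * D2 <= S.
  have -> : S = (x + y) / 2 * D2 + (x - y) * (a ^+ 2 - b ^+ 2) / 2 by rewrite /S /D2; field.
  have : 0 <= (x - y) * (a ^+ 2 - b ^+ 2) by apply: mulr_ge0; nra.
  have : 0 <= y * D2 by exact: mulr_ge0.
  lra.
have x0 : 0 <= x by lra.
have S0 : 0 <= S by apply: le_trans Sge; apply: mulr_ge0 => //; lra.
split => //; last by rewrite /D2; nra.
set W := x * a - y * b; set V := x * (a - b).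
have V0 : 0 <= V by apply: mulr_ge0; lra.
have VW : V <= W by rewrite /V /W; nra.
have WV : W <= (1 + al) * V by rewrite /V /W; nra.
have K1 : W ^+ 2 + V ^+ 2 <= 2 * (1 + al) * W * V by nra.
have K : W2 + x ^+ 2 * D2 <= 2 * (1 + al) * x * S.
  have E : 2 * (1 + al) * x * S - (W2 + x ^+ 2 * D2) =
    (2 * (1 + al) * W * V - (W ^+ 2 + V ^+ 2)) + 2 * al * x * (x + y) * (a * b - p).
    by rewrite /S /W2 /D2 /W /V; ring.
  have : 0 <= 2 * al * x * (x + y) * (a * b - p).
    apply: mulr_ge0; last lra. apply: mulr_ge0; last lra.
    apply: mulr_ge0 => //; apply: mulr_ge0 => //; lra.
  lra.
have K2 : 4 * x ^+ 2 * (W2 * D2) <= 4 * x ^+ 2 * ((1 + al) ^+ 2 * S ^+ 2).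
  have h1 : 4 * (x ^+ 2 * D2) * W2 <= (W2 + x ^+ 2 * D2) ^+ 2.
    rewrite -subr_ge0.
    have -> : (W2 + x ^+ 2 * D2) ^+ 2 - 4 * (x ^+ 2 * D2) * W2 = (W2 - x ^+ 2 * D2) ^+ 2 by ring.
    exact: sqr_ge0.
  have h2 : (W2 + x ^+ 2 * D2) ^+ 2 <= (2 * (1 + al) * x * S) ^+ 2.
    have h0 : 0 <= W2 + x ^+ 2 * D2 by apply: addr_ge0 => //; apply: mulr_ge0 => //; exact: sqr_ge0.
    rewrite ler_pXn2r // nnegrE //; exact: le_trans K.
  nra.
have [x00|xpos] := eqVneq x 0.
  have y00 : y = 0 by lra.
  rewrite /W2 x00 y00; nra.
have xx : 0 < 4 * x ^+ 2 by apply: mulr_gt0 => //; rewrite exprn_gt0 // lt_def xpos x0.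
by rewrite -(ler_pM2l xx).
Qed.
Lemma bern (al a b : R) : 0 < al -> 0 <= b -> b <= a ->
  powR a al * ((1 + al) * b - al * a) <= b * powR b al.
Proof.
move=> al0 b0 ba.
have pa := powR_ge0 a al; have pb := powR_ge0 b al.
have [->|bpos] := eqVneq b 0.
  rewrite mul0r; have : 0 <= powR a al * (al * a) by apply: mulr_ge0 => //; apply: mulr_ge0; lra.
  lra.
have bp : 0 < b by rewrite lt_def bpos b0.
have ap : 0 < a by apply: (Order.POrderTheory.lt_le_trans bp ba).
have Eb : b = a * (b / a) by field; rewrite gt_eqF.
have bap : 0 < b / a by exact: divr_gt0.
have Hb : powR b al = powR a al * powR (b / a) al.
  by rewrite {1}Eb powRM //; [exact: ltW | exact: ltW].
have Hl : 1 - a / b <= ln (b / a).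
  have : ln (1 + (a / b - 1)) <= a / b - 1.
    apply: le_ln1Dx; have : 0 < a / b by exact: divr_gt0. lra.
  have -> : 1 + (a / b - 1) = (b / a)^-1 by rewrite invf_div; ring.
  rewrite lnV ?posrE //; lra.
have He : 1 + al * (1 - a / b) <= powR (b / a) al.
  rewrite /powR gt_eqF //; apply: le_trans (expR_ge1Dx _).
  have : al * (1 - a / b) <= al * ln (b / a) by rewrite ler_pM2l.
  lra.
rewrite Hb.
have : powR a al * (b * (1 + al * (1 - a / b))) <= powR a al * (b * powR (b / a) al).
  by apply: ler_wpM2l => //; rewrite ler_pM2l.
have -> : b * (1 + al * (1 - a / b)) = (1 + al) * b - al * a by field; rewrite gt_eqF.
lra.
Qed.
Lemma core2 (al a b p : R) : 0 < al -> 0 <= a -> 0 <= b ->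
  p <= a * b -> - (a * b) <= p ->
  let x := powR a al in let y := powR b al in
  let S := x * a ^+ 2 + y * b ^+ 2 - (x + y) * p in
  let W2 := x ^+ 2 * a ^+ 2 + y ^+ 2 * b ^+ 2 - 2 * x * y * p in
  let D2 := a ^+ 2 + b ^+ 2 - 2 * p in
  [/\ W2 * D2 <= (1 + al) ^+ 2 * S ^+ 2, 0 <= S &
      powR (Num.sqrt D2) (al + 2) <= 2 * powR 2 al * S].
Proof.
move=> al0.
wlog ba : a b / b <= a.
  move=> H a0 b0 p1 p2.
  have [ba|ab] := leP b a; first exact: H.
  have := H b a (ltW ab) b0 a0; rewrite mulrC => /(_ p1 p2) /=.
  set x := powR a al; set y := powR b al.
  have -> : y * b ^+ 2 + x * a ^+ 2 - (y + x) * p = x * a ^+ 2 + y * b ^+ 2 - (x + y) * p by ring.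
  have -> : y ^+ 2 * b ^+ 2 + x ^+ 2 * a ^+ 2 - 2 * y * x * p = x ^+ 2 * a ^+ 2 + y ^+ 2 * b ^+ 2 - 2 * x * y * p by ring.
  by have -> : b ^+ 2 + a ^+ 2 - 2 * p = a ^+ 2 + b ^+ 2 - 2 * p by ring.
move=> a0 b0 p1 p2 x y S W2 D2.
have y0 : 0 <= y := powR_ge0 _ _.
have yx : y <= x by apply: ge0_ler_powR; rewrite ?nnegrE //; exact: ltW.
have [h1 h2 h3 h4] := @core al a b x y p al0 b0 ba y0 yx (@bern al a b al0 b0 ba) p1 p2.
split => //.
have D0 : 0 <= D2 by rewrite /D2; nra.
set e := Num.sqrt D2.
have e0 : 0 <= e := sqrtr_ge0 _.
have e2 : e ^+ 2 = D2 by rewrite sqr_sqrtr.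
have ea : e <= 2 * a.
  by rewrite /e -(ger0_norm (_ : 0 <= 2 * a)) ?mulr_ge0 // -sqrtr_sqr ler_wsqrtr.
have pe : powR e al <= powR 2 al * x.
  rewrite /x -powRM //; apply: ge0_ler_powR; rewrite ?nnegrE ?mulr_ge0 //; exact: ltW.
have -> : powR e (al + 2) = powR e al * D2.
  rewrite powRD; last by apply/implyP => /eqP; lra.
  by rewrite -e2 powR_mulrn.
have p2g : 0 <= powR 2 al := powR_ge0 _ _.
have : powR e al * D2 <= powR 2 al * x * D2 by apply: ler_wpM2r.
have : powR 2 al * (x * D2) <= powR 2 al * (2 * S).
  apply: ler_wpM2l => //.
  have -> : x * D2 = 2 * (x / 2 * D2) by field.
  rewrite /S /D2; lra.
rewrite mulrA; lra.
Qed.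

Section Vec.
Variable n : nat.
Implicit Types u v z : 'cV[R]_n.

Lemma dotvC u v : dotv u v = dotv v u.
Proof. by apply: eq_bigr => i _; rewrite mulrC. Qed.
Lemma dotvDl u v z : dotv (u + v) z = dotv u z + dotv v z.
Proof. by rewrite /dotv -big_split; apply: eq_bigr => i _; rewrite !mxE mulrDl. Qed.
Lemma dotvZl c u z : dotv (c *: u) z = c * dotv u z.
Proof. by rewrite /dotv mulr_sumr; apply: eq_bigr => i _; rewrite !mxE mulrA. Qed.
Lemma dotvNl u z : dotv (- u) z = - dotv u z.
Proof. by rewrite /dotv -sumrN; apply: eq_bigr => i _; rewrite !mxE mulNr. Qed.
Lemma dotvBl u v z : dotv (u - v) z = dotv u z - dotv v z.
Proof. by rewrite dotvDl dotvNl. Qed.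
Lemma dotvBr u v z : dotv z (u - v) = dotv z u - dotv z v.
Proof. by rewrite dotvC dotvBl !(dotvC z). Qed.
Lemma dotvZr c u z : dotv z (c *: u) = c * dotv z u.
Proof. by rewrite dotvC dotvZl dotvC. Qed.
Lemma dotv_ge0 u : 0 <= dotv u u.
Proof. by apply: sumr_ge0 => i _; rewrite -expr2 sqr_ge0. Qed.
Lemma enorm2 u : enorm u ^+ 2 = dotv u u.
Proof.
rewrite /enorm sqr_sqrtr; last by apply: sumr_ge0 => i _; exact: sqr_ge0.
by apply: eq_bigr => i _; rewrite expr2.
Qed.
Lemma enormE u : enorm u = Num.sqrt (dotv u u).
Proof. by rewrite /enorm /dotv; congr Num.sqrt; apply: eq_bigr => i _; rewrite expr2. Qed.
Lemma dotv_CS u v : dotv u v ^+ 2 <= dotv u u * dotv v v.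
Proof.
have := @CS 'I_n (fun i => u i 0) (fun i => v i 0).
have e z : dotv z z = \sum_i z i 0 ^+ 2 by apply: eq_bigr => i _; rewrite expr2.
by rewrite !e.
Qed.

Lemma vec_key al u v : 0 < al ->
  let x := powR (enorm u) al in let y := powR (enorm v) al in
  let w := x *: u - y *: v in let d := u - v in
  [/\ dotv w w * dotv d d <= (1 + al) ^+ 2 * dotv w d ^+ 2, 0 <= dotv w d &
      powR (enorm d) (al + 2) <= 2 * powR 2 al * dotv w d].
Proof.
move=> al0 x y w d.
set a := enorm u; set b := enorm v; set p := dotv u v.
have a0 : 0 <= a := sqrtr_ge0 _.
have b0 : 0 <= b := sqrtr_ge0 _.
have ea : dotv u u = a ^+ 2 by rewrite enorm2.
have eb : dotv v v = b ^+ 2 by rewrite enorm2.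
have cs : p ^+ 2 <= (a * b) ^+ 2 by rewrite exprMn -ea -eb; exact: dotv_CS.
have ab0 : 0 <= a * b := mulr_ge0 a0 b0.
have p1 : p <= a * b by rewrite leNgt; apply/negP => h; nra.
have p2 : - (a * b) <= p by rewrite leNgt; apply/negP => h; nra.
have [h1 h2 h3] := @core2 al a b p al0 a0 b0 p1 p2.
have Ewd : dotv w d = x * a ^+ 2 + y * b ^+ 2 - (x + y) * p.
  rewrite /w /d dotvBl !dotvZl !dotvBr -ea -eb /p (dotvC v u); ring.
have Eww : dotv w w = x ^+ 2 * a ^+ 2 + y ^+ 2 * b ^+ 2 - 2 * x * y * p.
  rewrite /w dotvBl !dotvZl !dotvBr !dotvZr -ea -eb /p (dotvC v u); ring.
have Edd : dotv d d = a ^+ 2 + b ^+ 2 - 2 * p.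
  rewrite /d dotvBl !dotvBr -ea -eb /p (dotvC v u); ring.
by rewrite Ewd Eww Edd enormE Edd.
Qed.

Definition fro2 (M : 'M[R]_n) := \sum_i \sum_j M i j ^+ 2.

Lemma fro2_ge0 M : 0 <= fro2 M.
Proof. by apply: sumr_ge0 => i _; apply: sumr_ge0 => j _; exact: sqr_ge0. Qed.

Lemma matCS (B : 'M[R]_n) w d : dotv (B *m w) d ^+ 2 <= fro2 B * dotv w w * dotv d d.
Proof.
have e z : dotv z z = \sum_i z i 0 ^+ 2 by apply: eq_bigr => i _; rewrite expr2.
have h1 := @CS 'I_n (fun i => (B *m w) i 0) (fun i => d i 0).
apply: le_trans h1 _; rewrite !e.
apply: ler_wpM2r; first by apply: sumr_ge0 => i _; exact: sqr_ge0.
rewrite /fro2 mulr_suml; apply: ler_sum => i _.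
rewrite mxE; exact: (@CS 'I_n (fun j => B i j) (fun j => w j 0)).
Qed.

Lemma lin_id (A : 'M[R]_n) (lam x y : R) u v :
  lam *: (x *: (A *m u) - y *: (A *m v)) =
  (x *: u - y *: v) + (lam *: A - 1%:M) *m (x *: u - y *: v).
Proof.
rewrite mulmxBl mul1mx addrCA subrr addr0 -scalemxAl mulmxBr !scalemxAr.
by [].
Qed.

Lemma fro2_B (A : 'M[R]_n) (lam : R) :
  fro2 (lam *: A - 1%:M) = lam ^+ 2 * fro2 A - 2 * lam * \tr A + n%:R.
Proof.
have row i : \sum_j (lam *: A - 1%:M) i j ^+ 2 =
    lam ^+ 2 * (\sum_j A i j ^+ 2) - 2 * lam * A i i + 1.
  rewrite (bigD1 i) //= [X in _ = _ * X - _ + _](bigD1 i) //= !mxE eqxx mulr1n.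
  have -> : \sum_(j | j != i) (lam *: A - 1%:M) i j ^+ 2 =
            \sum_(j | j != i) lam ^+ 2 * A i j ^+ 2.
    by apply: eq_bigr => j ji; rewrite !mxE eq_sym (negbTE ji) mulr0n subr0 exprMn.
  rewrite -mulr_sumr; ring.
rewrite /fro2 (eq_bigr _ (fun i _ => row i)) /= big_split /= sumrB -mulr_sumr.
rewrite sumr_const card_ord /mxtrace -mulr_sumr; ring.
Qed.
End Vec.
End Aux.

Lemma frobE (R : realType) (n : nat) (A : 'M[R]_n) : frob A = Num.sqrt (fro2 A).
Proof. by []. Qed.

Lemma step (R : realType) (n : nat) (A : 'M[R]_n) (alpha : R) (lam : R) u v :
  0 < alpha -> 0 < lam ->
  let fB := fro2 (lam *: A - 1%:M) in
  let S := dotv (powR (enorm u) alpha *: u - powR (enorm v) alpha *: v) (u - v) in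
  let Q := lam * dotv (F_Aalpha A alpha u - F_Aalpha A alpha v) (u - v) - S in
  [/\ 0 <= S, Q ^+ 2 <= fB * (1 + alpha) ^+ 2 * S ^+ 2 &
      powR (enorm (u - v)) (alpha + 2) <= 2 * powR 2 alpha * S].
Proof.
move=> al0 lam0 fB S Q.
have [h1 h2 h3] := vec_key u v al0.
set w := powR (enorm u) alpha *: u - powR (enorm v) alpha *: v in h1 h2 h3.
have EQ : Q = dotv ((lam *: A - 1%:M) *m w) (u - v).
  rewrite /Q -dotvZl /F_Aalpha lin_id dotvDl; rewrite /S; ring.
split => //.
rewrite EQ; apply: le_trans (matCS _ _ _) _.
rewrite -/fB -!mulrA; apply: ler_wpM2l; first exact: fro2_ge0.
by rewrite mulrA -expr2.
Qed.

Theorem mainTheorem12 (R : realType) (n : nat) (A : 'M[R]_n) (alpha : R)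
  (halpha : 0 < alpha) :
  (Num.sqrt (n%:R - 1 / (1 + alpha) ^+ 2) <= \tr A / frob A ->
     monotone_map (F_Aalpha A alpha)) /\
  (Num.sqrt (n%:R - 1 / (1 + alpha) ^+ 2) < \tr A / frob A ->
     beta_monotone (alpha + 2) (F_Aalpha A alpha)).
Proof.
set d2 := 1 / (1 + alpha) ^+ 2.
have a1 : 1 < (1 + alpha) ^+ 2 by nra.
have d20 : 0 < d2 by rewrite /d2 divr_gt0 //; lra.
have d2a : d2 * (1 + alpha) ^+ 2 = 1 by rewrite /d2 mul1r mulVf //; rewrite gt_eqF //; lra.
have d2lt : d2 < 1 by nra.
destruct n as [|m].
  split.
    by move=> _ u v; rewrite /dotv big_ord0.
  move=> H; exfalso; move: H; rewrite /mxtrace big_ord0 mul0r.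
  by rewrite ltNge sqrtr_ge0.
set N := m.+1.
set T := \tr A; set N2 := fro2 A.
have N1 : (1 : R) <= N%:R by rewrite ler1n.
have pos : 0 < N%:R - d2 by lra.
have sq0 : 0 < Num.sqrt (N%:R - d2) by rewrite sqrtr_gt0.
have gen : Num.sqrt (N%:R - d2) <= T / frob A -> 0 < N2 /\ 0 < T.
  move=> H; have hq : 0 < T / frob A by exact: lt_le_trans H.
  have f0 : frob A != 0.
    by apply/negP => /eqP f0; move: hq; rewrite f0 invr0 mulr0 ltxx.
  have fp : 0 < frob A by rewrite lt_def f0 sqrtr_ge0.
  split; first by move: fp; rewrite frobE sqrtr_gt0.
  have -> : T = T / frob A * frob A by rewrite divfK.
  exact: mulr_gt0.
have sqf : forall (H : 0 < N2), (T / frob A) ^+ 2 = T ^+ 2 / N2.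
  by move=> H; rewrite expr_div_n frobE sqr_sqrtr // ltW.
have sqd : Num.sqrt (N%:R - d2) ^+ 2 = N%:R - d2 by rewrite sqr_sqrtr // ltW.
have fBE : forall (H : 0 < N2), fro2 ((T / N2) *: A - 1%:M) = N%:R - T ^+ 2 / N2.
  by move=> H; rewrite fro2_B -/T -/N2 -/N; field; rewrite gt_eqF.
split.
- move=> H.
  have [N20 T0] := gen H.
  have lam0 : 0 < T / N2 by exact: divr_gt0.
  have hle : N%:R - d2 <= T ^+ 2 / N2.
    by rewrite -sqd -sqf // ler_pXn2r // nnegrE ?sqrtr_ge0 // ltW // (lt_le_trans sq0 H).
  have fB : fro2 ((T / N2) *: A - 1%:M) <= d2 by rewrite fBE //; lra.
  move=> u v.
  have [S0 hQ _] := step A u v halpha lam0.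
  set S := dotv _ (u - v) in S0 hQ.
  set D := dotv (F_Aalpha A alpha u - F_Aalpha A alpha v) (u - v) in hQ *.
  set fb := fro2 _ in hQ fB.
  have fb0 : 0 <= fb := fro2_ge0 _.
  have hQ2 : (T / N2 * D - S) ^+ 2 <= S ^+ 2.
    apply: le_trans hQ _.
    have : fb * (1 + alpha) ^+ 2 <= d2 * (1 + alpha) ^+ 2.
      by apply: ler_wpM2r => //; exact: sqr_ge0.
    rewrite d2a.
    have := sqr_ge0 S; nra.
  have : 0 <= T / N2 * D by nra.
  by rewrite pmulr_rge0.
- move=> H.
  have [N20 T0] := gen (ltW H).
  have lam0 : 0 < T / N2 by exact: divr_gt0.
  have hlt : N%:R - d2 < T ^+ 2 / N2.
    by rewrite -sqd -sqf // ltr_pXn2r // nnegrE ?sqrtr_ge0 // ltW // (lt_trans sq0 H).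
  have fB : fro2 ((T / N2) *: A - 1%:M) < d2 by rewrite fBE //; lra.
  set fb := fro2 _ in fB.
  have fb0 : 0 <= fb := fro2_ge0 _.
  set c := Num.sqrt fb * (1 + alpha).
  have c0 : 0 <= c by rewrite /c mulr_ge0 ?sqrtr_ge0 //; lra.
  have c2 : c ^+ 2 = fb * (1 + alpha) ^+ 2 by rewrite /c exprMn sqr_sqrtr.
  have c2lt : c ^+ 2 < 1.
    have : fb * (1 + alpha) ^+ 2 < d2 * (1 + alpha) ^+ 2 by rewrite ltr_pM2r //; lra.
    by rewrite d2a c2.
  have c1 : c < 1 by nra.
  set K := 2 * powR 2 alpha.
  have K0 : 0 < K by rewrite /K mulr_gt0 // powR_gt0.
  exists ((1 - c) / (T / N2 * K)); split.
    by rewrite divr_gt0 ?subr_gt0 // mulr_gt0.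
  move=> u v.
  have [S0 hQ hP] := step A u v halpha lam0.
  set S := dotv _ (u - v) in S0 hQ hP.
  set D := dotv (F_Aalpha A alpha u - F_Aalpha A alpha v) (u - v) in hQ *.
  rewrite -/fb -c2 in hQ.
  set P := powR _ _ in hP *.
  set lam := T / N2 in hQ lam0 *.
  have hQ' : - (c * S) <= lam * D - S.
    rewrite leNgt; apply/negP => h.
    have cS : 0 <= c * S by exact: mulr_ge0.
    nra.
  have h1 : (1 - c) * P <= K * (lam * D).
    have hP' : P <= K * S by [].
    have e1 : (1 - c) * P <= (1 - c) * (K * S).
      by apply: ler_wpM2l => //; rewrite subr_ge0 ltW.
    have e2 : K * (S - c * S) <= K * (lam * D).
      by apply: ler_wpM2l; [exact: ltW | lra].
    have e3 : K * (S - c * S) = (1 - c) * (K * S) by ring.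
    lra.
  have -> : (1 - c) / (lam * K) * P = ((1 - c) * P) / (lam * K) by rewrite mulrAC.
  have lK : 0 < lam * K by exact: mulr_gt0.
  rewrite ler_pdivrMr //.
  have -> : D * (lam * K) = K * (lam * D) by ring.
  exact: h1.
Qed.
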